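(* Let $1\le m<n$ and let $v_1\ge v_2\ge\cdots\ge v_n$ be reals with $v_m>0$. Let $k=\max\{i:v_i>v_m/2\}$ (so $k\ge m$). For $i\in[n]$ define $B_i=\sum_{j=1}^k\frac{m}{j(j+1)}\log_2^\dagger(v_i/v_j)$. Then $\sum_{i=m}^kB_i\le m$.
   Context: $\log_2^\dagger(\alpha)=\max(0,\min(1,\log_2\alpha))$ for $\alpha\ge 0$. *)

(* Defs.v *)
From mathcomp Require Import all_boot all_order all_algebra.
From mathcomp Require Import all_classical all_reals all_analysis.
Set Implicit Arguments. Unset Strict Implicit. Unset Printing Implicit Defensive.
Import Order.TTheory GRing.Theory Num.Theory.
Local Open Scope ring_scope.

(* log_2^dagger(a) = max(0, min(1, log_2 a)) for a >= 0;
   for a = 0, log_2 a = -oo so the value is 0.  We also return 0 for a < 0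
   (never used in the theorem). *)
Definition log2dag {R : realType} (a : R) : R :=
  if a <= 0 then 0 else Num.max 0 (Num.min 1 (ln a / ln 2)).

Definition kidx {R : realType} (n m : nat) (v : nat -> R) : nat :=
  (\max_(1 <= i < n.+1 | (v m / 2 < v i)%R) i)%N.

Definition Bval {R : realType} (n m : nat) (v : nat -> R) (i : nat) : R :=
  \sum_(1 <= j < (kidx n m v).+1)
     (m%:R / (j * j.+1)%:R) * log2dag (v i / v j).

(* Main.v *)
Require Import Defs.
From mathcomp Require Import all_boot all_order all_algebra.
From mathcomp Require Import all_classical all_reals all_analysis.
From mathcomp Require Import ring lra.
Import Order.TTheory GRing.Theory Num.Theory.

Lemma attain (P : pred nat) a b i0 : (a <= i0 < b)%N -> P i0 -> P (\max_(a <= i < b | P i) i).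
Proof.
elim: b i0 => [|b IH] i0; first by rewrite ltn0 andbF.
move=> /andP [h1 h2] hP.
have hab : a <= b by rewrite (leq_trans h1) // -ltnS.
rewrite big_mkcond big_nat_recr //= -big_mkcond.
case hb: (P b).
  have : \max_(a <= i < b | P i) i <= b.
    apply/bigmax_leqP_seq => i; rewrite mem_index_iota => /andP [_ hi] _; exact: ltnW.
  by move/maxn_idPr => ->.
rewrite maxn0; apply: (IH i0) => //.
rewrite h1 /= ltn_neqAle -ltnS h2 andbT.
by apply/eqP => e; rewrite -e hP in hb.
Qed.
Local Open Scope ring_scope.

Lemma key (R : realFieldType) (m N : nat) (b : nat -> R) :
  (1 <= m)%N -> (forall i j, (1 <= i)%N -> (i <= j)%N -> (j <= N)%N -> b i <= b j) ->
  forall d, (m + d <= N)%N ->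
  \sum_(m <= i < (m+d).+1) \sum_(1 <= j < (m+d).+1)
      (1 / (j * j.+1)%:R) * Num.max 0 (b j - b i)
  + ((m+d).+1%:R)^-1 * \sum_(m <= i < (m+d).+1) (b (m+d)%N - b i) <= b (m+d)%N - b m.
Proof.
move=> hm hb.
have row0 : forall K, (K <= N)%N -> (1 <= K)%N ->
   \sum_(1 <= j < K.+1) (1 / (j * j.+1)%:R) * Num.max 0 (b j - b K) = 0 :> R.
  move=> K hK hK1; rewrite big_nat big1 // => j /andP [hj1 hj2].
  have : b j - b K <= 0 by rewrite subr_le0; apply: (hb) => //; rewrite -ltnS.
  by move=> h; rewrite (max_idPl h) mulr0.
elim=> [|d IH] hd.
  rewrite addn0 in hd *; rewrite big_nat1 row0 //.
  by rewrite big_nat1 !subrr mulr0 addr0.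
set K := (m + d)%N in IH *.
have -> : (m + d.+1 = K.+1)%N by rewrite /K addnS.
have hK : (K.+1 <= N)%N by rewrite /K -addnS.
have IH' := IH (ltnW hK).
rewrite big_nat_recr /=; last by rewrite /K ltnW // ltnS leq_addr.
rewrite row0 // addr0.
have e1 : \sum_(m <= i < K.+1) \sum_(1 <= j < K.+2)
      (1 / (j * j.+1)%:R) * Num.max 0 (b j - b i) =
   \sum_(m <= i < K.+1) \sum_(1 <= j < K.+1)
      (1 / (j * j.+1)%:R) * Num.max 0 (b j - b i) +
   (1 / (K.+1 * K.+2)%:R) * \sum_(m <= i < K.+1) (b K.+1 - b i).
  rewrite mulr_sumr -big_split /=; rewrite !big_nat; apply: eq_bigr => i /andP [hi1 hi2].
  rewrite big_nat_recr //=; congr (_ + _).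
  rewrite (max_idPr _) //; rewrite subr_ge0; apply: (hb) => //.
  exact: leq_trans hm hi1. exact: ltnW.
rewrite e1.
rewrite (@big_nat_recr _ _ _ K.+1 m) /=; last by rewrite /K ltnW // ltnS leq_addr.
rewrite subrr addr0.
have e2 : \sum_(m <= i < K.+1) (b K.+1 - b i) =
   (K.+1 - m)%:R * (b K.+1 - b K) + \sum_(m <= i < K.+1) (b K - b i).
  rewrite mulr_natl -sumr_const_nat -big_split /=.
  by apply: eq_bigr => i _; rewrite addrA subrK.
rewrite e2.
set S := \sum_(m <= i < K.+1) _ in IH' *.
set X := \sum_(m <= i < K.+1) _ in IH' *.
set c := (K.+1 - m)%:R.
have del : 0 <= b K.+1 - b K by rewrite subr_ge0; apply: (hb) => //; rewrite /K (leq_trans hm) // leq_addr.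
have hc0 : 0 <= c by [].
have hc : c <= K.+1%:R by rewrite ler_nat leq_subr.
have hK0 : 0 < K.+1%:R :> R by [].
have h1 : (1 / (K.+1 * K.+2)%:R) * (c * (b K.+1 - b K) + X) + (K.+2%:R)^-1 * (c * (b K.+1 - b K) + X)
   = (K.+1%:R)^-1 * X + (c / K.+1%:R) * (b K.+1 - b K).
  rewrite natrM; field.
  have hk : 0 <= K%:R :> R by []. by apply/andP; split; rewrite gt_eqF //; lra.
have h2 : (c / K.+1%:R) * (b K.+1 - b K) <= b K.+1 - b K.
  apply: ler_piMl => //; by rewrite ler_pdivrMr // mul1r.
rewrite -addrA h1 addrA. apply: le_trans (lerD IH' h2) _. rewrite le_eqVlt; apply/orP; left; apply/eqP; ring.
Qed.

Theorem mainTheorem19 (R : realType) (n m : nat) (v : nat -> R)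
  (hm1 : (1 <= m)%N) (hmn : (m < n)%N)
  (hv : forall i j : nat, (1 <= i)%N -> (i <= j)%N -> (j <= n)%N -> v j <= v i)
  (hvm : 0 < v m) :
  \sum_(m <= i < (kidx n m v).+1) Bval n m v i <= m%:R.
Proof.
set k := kidx n m v.
have hPk : v m / 2 < v k.
  rewrite /k /kidx; apply: (@attain (fun i => v m / 2 < v i) 1 n.+1 m) => /=.
    by rewrite hm1 ltnS ltnW.
  lra.
have hmk : (m <= k)%N.
  rewrite /k /kidx; apply: (@leq_bigmax_seq _ _ _ (fun i => i) m) => /=.
    by rewrite mem_index_iota hm1 ltnS ltnW.
  lra.
have hkn : (k <= n)%N.
  rewrite /k /kidx; apply/bigmax_leqP_seq => i; rewrite mem_index_iota => /andP [_ hi] _.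
  by rewrite -ltnS.
have vpos : forall j, (1 <= j)%N -> (j <= k)%N -> 0 < v j.
  move=> j h1 h2; have : v k <= v j by apply: hv.
  lra.
have ln2 : 0 < ln (2 : R) by apply: ln_gt0; lra.
pose b j := - ln (v j) / ln 2.
have hmono : forall i j, (1 <= i)%N -> (i <= j)%N -> (j <= k)%N -> b i <= b j.
  move=> i j h1 h2 h3; rewrite /b ler_pM2r ?invr_gt0 // lerN2 ler_ln ?posrE.
  - by apply: hv => //; apply: leq_trans hkn.
  - by apply: vpos => //; apply: leq_trans h1 h2.
  - by apply: vpos => //; apply: leq_trans h2 h3.
have hlt : b k - b m < 1.
  have -> : b k - b m = (ln (v m) - ln (v k)) / ln 2 by rewrite /b; field; rewrite gt_eqF //.
  have vk := vpos k (leq_trans hm1 hmk) (leqnn k).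
  rewrite ltr_pdivrMr // mul1r ltrBlDr -lnM ?posrE //.
  rewrite ltr_ln ?posrE //; try lra.
have heq : forall i j, (m <= i)%N -> (i <= k)%N -> (1 <= j)%N -> (j <= k)%N ->
    log2dag (v i / v j) = Num.max 0 (b j - b i).
  move=> i j h1 h2 h3 h4.
  have vi := vpos i (leq_trans hm1 h1) h2.
  have vj := vpos j h3 h4.
  rewrite /log2dag ifF; last by apply/negbTE; rewrite -ltNge divr_gt0.
  have -> : ln (v i / v j) / ln 2 = b j - b i.
    rewrite lnM ?posrE ?invr_gt0 // lnV ?posrE // /b; field; rewrite gt_eqF //.
  have : b j - b i < 1.
    have := hmono j k h3 h4 (leqnn k).
    have := hmono m i hm1 h1 h2.
    lra.
  by move=> h; rewrite (min_idPr (ltW h)).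
have E : \sum_(m <= i < k.+1) Bval n m v i =
   m%:R * \sum_(m <= i < k.+1) \sum_(1 <= j < k.+1)
      (1 / (j * j.+1)%:R) * Num.max 0 (b j - b i).
  rewrite mulr_sumr !big_nat; apply: eq_bigr => i /andP [h1 h2].
  rewrite /Bval -/k mulr_sumr !big_nat; apply: eq_bigr => j /andP [h3 h4].
  rewrite heq // ?div1r ?mulrA //; by rewrite -ltnS.
rewrite E.
have K := @key R m k b hm1 hmono (k - m)%N.
rewrite subnKC // in K.
have {}K := K (leqnn k).
have X0 : 0 <= (k.+1%:R)^-1 * \sum_(m <= i < k.+1) (b k - b i).
  rewrite mulr_ge0 // big_nat sumr_ge0 // => i /andP [h1 h2].
  rewrite subr_ge0; apply: hmono => //; first exact: leq_trans hm1 h1.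
rewrite -[X in _ <= X]mulr1 ler_wpM2l //.
apply: le_trans _ (ltW hlt); apply: le_trans _ K; by rewrite lerDl.
Qed.
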